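(* Consider an instance of additive multislope ski rental with states $0,\dots,k$, buying costs $b_0<b_1<\dots<b_k$ and rental rates $r_0>r_1>\dots>r_k\ge0$, such that $s_1<\dots<s_k$ where $s_i=\frac{b_i-b_{i-1}}{r_{i-1}-r_i}$. Let $c\ge1$. If there exists a $c$-competitive prudent profile, then there exists a $c$-competitive tight profile.
   Context: A profile is a vector $p(t)=(p_0(t),\dots,p_k(t))$ of nonnegative functions of $t\ge0$ with $\sum_ip_i(t)=1$ for all $t$ ($p_i(t)$ = probability of being in state $i$ at time $t$). Define $B_p(t)=\sum_ip_i(t)b_i$, $R_p(t)=\sum_ip_i(t)r_i$, $X_p(t)=B_p(t)+\int_0^tR_p(z)\,dz$ and $\textsc{opt}(t)=\min_i(b_i+r_it)$. A profile is $c$-competitive if $X_p(t)\le c\,\textsc{opt}(t)$ for all $t\ge0$. It is prudent if at every time the set $\{i:p_i(t)>0\}$ is either a single slope or two consecutive slopes. A prudent $c$-competitive profile $p$ is tight if $X_p(t)=c\cdot\textsc{opt}(t)$ for all $t$ with $p_k(t)<1$. *)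

(* Defs.v *)
From HB Require Import structures.
From mathcomp Require Import all_boot all_order all_algebra.
From mathcomp Require Import all_classical all_reals all_analysis.
Set Implicit Arguments. Unset Strict Implicit. Unset Printing Implicit Defensive.
Import Order.TTheory GRing.Theory Num.Theory.
Local Open Scope classical_set_scope.
Local Open Scope ring_scope.

Section SkiRental.
Variable R : realType.

(* states 0..k ; b i = buying cost, r i = rental rate, p i t = probability
   of being in state i at time t. *)

Definition slope_s (b r : nat -> R) (i : nat) : R :=
  (b i - b i.-1) / (r i.-1 - r i).

Definition valid_instance (k : nat) (b r : nat -> R) : Prop :=
  0 <= b 0%N /\
  (forall i, (i < k)%N -> b i < b i.+1) /\
  (forall i, (i < k)%N -> r i.+1 < r i) /\
  0 <= r k /\
  (forall i, (1 <= i)%N -> (i < k)%N -> slope_s b r i < slope_s b r i.+1).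

Definition profile (k : nat) (p : nat -> R -> R) : Prop :=
  (forall i, (i <= k)%N -> measurable_fun setT (p i)) /\
  (forall i t, (i <= k)%N -> 0 <= t -> 0 <= p i t) /\
  (forall t, 0 <= t -> \sum_(i < k.+1) p i t = 1).

Definition B_p (k : nat) (b : nat -> R) (p : nat -> R -> R) (t : R) : R :=
  \sum_(i < k.+1) p i t * b i.

Definition R_p (k : nat) (r : nat -> R) (p : nat -> R -> R) (t : R) : R :=
  \sum_(i < k.+1) p i t * r i.

Definition X_p (k : nat) (b r : nat -> R) (p : nat -> R -> R) (t : R) : R :=
  B_p k b p t + Rintegral lebesgue_measure `[0, t] (R_p k r p).

Definition opt (k : nat) (b r : nat -> R) (t : R) : R :=
  \big[Num.min/(b 0%N + r 0%N * t)]_(i < k.+1) (b i + r i * t).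

Definition competitive (k : nat) (b r : nat -> R) (c : R)
    (p : nat -> R -> R) : Prop :=
  profile k p /\ forall t, 0 <= t -> X_p k b r p t <= c * opt k b r t.

Definition prudent (k : nat) (p : nat -> R -> R) : Prop :=
  profile k p /\
  forall t, 0 <= t -> exists i : nat, forall j, (j <= k)%N -> 0 < p j t ->
    j = i \/ j = i.+1.

Definition tight (k : nat) (b r : nat -> R) (c : R) (p : nat -> R -> R)
  : Prop :=
  prudent k p /\ competitive k b r c p /\
  forall t, 0 <= t -> p k t < 1 -> X_p k b r p t = c * opt k b r t.

End SkiRental.

(* Main.v *)
From HB Require Import structures.
Require Import Defs.
From mathcomp Require Import all_boot all_order all_algebra.
From mathcomp Require Import all_classical all_reals all_analysis.
From mathcomp Require Import ring lra zify.
From mathcomp Require Import measurable_realfun.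
Set Implicit Arguments. Unset Strict Implicit. Unset Printing Implicit Defensive.
Import Order.TTheory GRing.Theory Num.Theory.
Import numFieldNormedType.Exports.
Local Open Scope classical_set_scope.
Local Open Scope ring_scope.


Section Alg.
Context (R : realType) (k : nat) (b r : nat -> R).
Hypothesis Hb : forall i, (i < k)%N -> b i < b i.+1.

Lemma b_mono m n : (m <= n)%N -> (n <= k)%N -> b m <= b n.
Proof.
move=> mn nk; elim: n mn nk => [|n IH]; first by rewrite leqn0 => /eqP ->.
rewrite leq_eqVlt => /orP[/eqP -> //|]; rewrite ltnS => mn nk.
apply: le_trans (IH mn (ltnW nk)) _; exact/ltW/Hb.
Qed.

Lemma b_strict m n : (m < n)%N -> (n <= k)%N -> b m < b n.
Proof.
move=> mn nk; have h := Hb (leq_trans mn nk).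
apply: lt_le_trans h _; exact: b_mono.
Qed.

Definition phi (j : nat) (x : R) : R :=
  if j == 0%N then 1 else if (j <= k)%N then
    Num.min 1 (Num.max 0 ((x - b j.-1) / (b j - b j.-1))) else 0.

Lemma clamp_ge0 (y : R) : 0 <= Num.min 1 (Num.max 0 y).
Proof. rewrite le_min ler01 le_max lexx //. Qed.
Lemma clamp_le1 (y : R) : Num.min 1 (Num.max 0 y) <= 1.
Proof. by rewrite ge_min lexx. Qed.

Lemma phi_ge0 j x : 0 <= phi j x.
Proof. rewrite /phi; case: ifP => _; first exact: ler01.
case: ifP => _ //; exact: clamp_ge0. Qed.

Lemma phi_le1 j x : phi j x <= 1.
Proof. rewrite /phi; case: ifP => _ //; case: ifP => _; [exact: clamp_le1|exact: ler01]. Qed.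

Lemma dpos j : (0 < j)%N -> (j <= k)%N -> 0 < b j - b j.-1.
Proof. move=> j0 jk; rewrite subr_gt0; case: j j0 jk => // n _ jk; exact: Hb. Qed.

Lemma phi_eq1 j x : (j <= k)%N -> b j <= x -> phi j x = 1.
Proof.
move=> jk bx; rewrite /phi; case: ifP => // /negbT j0; rewrite jk.
rewrite -lt0n in j0; have d := dpos j0 jk.
have h : 1 <= (x - b j.-1) / (b j - b j.-1).
  by rewrite ler_pdivlMr // mul1r lerD2r.
by rewrite (max_r (le_trans ler01 h)) (min_l h).
Qed.

Lemma phi_eq0 j x : (0 < j)%N -> x <= b j.-1 -> phi j x = 0.
Proof.
move=> j0 xb; rewrite /phi; case: ifP => [/eqP j00|_]; first by rewrite j00 in j0.
case: ifP => // jk; have d := dpos j0 jk.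
have h : (x - b j.-1) / (b j - b j.-1) <= 0.
  by rewrite ler_pdivrMr // mul0r subr_le0.
by rewrite (max_l h) (min_r ler01).
Qed.

Lemma phi_mid j x : (0 < j)%N -> (j <= k)%N -> b j.-1 <= x -> x <= b j ->
  phi j x = (x - b j.-1) / (b j - b j.-1).
Proof.
move=> j0 jk h1 h2; rewrite /phi; case: ifP => [/eqP j00|_]; first by rewrite j00 in j0.
rewrite jk; have d := dpos j0 jk.
have a : 0 <= (x - b j.-1) / (b j - b j.-1) by apply: divr_ge0; [rewrite subr_ge0|apply: ltW].
have c : (x - b j.-1) / (b j - b j.-1) <= 1 by rewrite ler_pdivrMr // mul1r lerD2r.
by rewrite (max_r a) (min_r c).
Qed.

Lemma phi_big j x : (k < j)%N -> phi j x = 0.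
Proof. move=> kj; rewrite /phi; case: ifP => [/eqP j0|_]; first by rewrite j0 in kj.
by rewrite leqNgt kj. Qed.

Lemma phi_nd j : {homo phi j : x y / x <= y}.
Proof.
move=> x y xy; rewrite /phi; case: ifP => [//|/negbT]; rewrite -lt0n => j0.
case: ifP => // jk.
apply: le_min2 => //; apply: le_max2 => //.
have d := dpos j0 jk; rewrite ler_pM2r ?invr_gt0 //; exact: lerB.
Qed.

Lemma phi_dec j x : phi j.+1 x <= phi j x.
Proof.
have [->|j0] := posnP j; first by rewrite [X in _ <= X]/phi /= phi_le1.
have [xb|bx] := leP x (b j); first by rewrite (@phi_eq0 j.+1) // phi_ge0.
have [jk|kj] := leqP j k; first by rewrite (phi_eq1 jk (ltW bx)) phi_le1.
by rewrite phi_big ?phi_ge0 // ltnW.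
Qed.

Definition w j x := phi j x - phi j.+1 x.

Lemma w_ge0 j x : 0 <= w j x.
Proof. by rewrite /w subr_ge0 phi_dec. Qed.

Lemma sum_w x : \sum_(j < k.+1) w j x = 1.
Proof.
have := @telescope_sumr R 0 k.+1 (fun j => phi j x) isT.
rewrite big_mkord => h.
rewrite /w; under eq_bigr do rewrite -opprB.
rewrite sumrN h phi_big // /phi /=; by rewrite sub0r opprK.
Qed.

Lemma abel (u y : nat -> R) n :
  \sum_(j < n.+1) (u j - u j.+1) * y j =
  u 0%N * y 0%N - u n.+1 * y n - \sum_(j < n) u j.+1 * (y j - y j.+1).
Proof.
elim: n => [|n IH]; first by rewrite big_ord_recr big_ord0 /= big_ord0; ring.
by rewrite big_ord_recr /= IH [in RHS]big_ord_recr /=; ring.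
Qed.

Lemma wsum_abel (y : nat -> R) x :
  \sum_(j < k.+1) w j x * y j =
  y 0%N - \sum_(j < k) phi j.+1 x * (y j - y j.+1).
Proof. rewrite /w (abel (fun j => phi j x)) (@phi_big k.+1) // mul0r subr0.
by have -> : phi 0 x = 1 by []; rewrite mul1r. Qed.

Lemma phi_seg i x j : (i < k)%N -> b i <= x -> x <= b i.+1 ->
  phi j x = if (j <= i)%N then 1 else if j == i.+1 then
               (x - b i) / (b i.+1 - b i) else 0.
Proof.
move=> ik h1 h2; case: ifP => ji.
  apply: phi_eq1; first by apply: leq_trans (ltnW ik).
  by apply: le_trans h1; apply: b_mono => //; exact: ltnW.
case: ifP => [/eqP ->|jn]; first by rewrite phi_mid.
have ij : (i.+2 <= j)%N.
  by move/negbT: ji; move/negbT: jn; lia.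
have [jk|kj] := leqP j k; last exact: phi_big.
apply: phi_eq0; first exact: leq_trans ij.
apply: le_trans h2 _; apply: b_mono; last by apply: leq_trans jk; exact: leq_pred.
by case: j ij {ji jn jk}.
Qed.

Lemma w_seg i x j : (i < k)%N -> b i <= x -> x <= b i.+1 ->
  w j x = if j == i then 1 - (x - b i) / (b i.+1 - b i) else
          if j == i.+1 then (x - b i) / (b i.+1 - b i) else 0.
Proof.
move=> ik h1 h2; rewrite /w !(phi_seg j.+1 ik h1 h2) !(phi_seg j ik h1 h2).
have [ji|ji|->] := ltngtP j i.
- have e4 : (j == i.+1) = false by apply/negbTE; lia.
  by rewrite e4 subrr.
- have e5 : (j.+1 == i.+1) = false by apply/negbTE; lia.
  by rewrite e5 subr0.
- by rewrite eqxx.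
Qed.

Lemma sum2 (F : nat -> R) i : (i < k)%N ->
  (forall j, (j <= k)%N -> j != i -> j != i.+1 -> F j = 0) ->
  \sum_(j < k.+1) F j = F i + F i.+1.
Proof.
move=> ik hF.
have i1 : (i < k.+1)%N by apply: ltnW.
have i2 : (i.+1 < k.+1)%N by [].
rewrite (bigD1 (Ordinal i1)) //= (bigD1 (Ordinal i2)) //=; last first.
  by rewrite -val_eqE /= (gtn_eqF (ltnSn i)).
rewrite big1 ?addr0 ?addrA // => j /andP[h1 h2].
apply: hF; first by rewrite -ltnS.
- by move: h1; rewrite -val_eqE.
- by move: h2; rewrite -val_eqE.
Qed.

Lemma B_seg i x : (i < k)%N -> b i <= x -> x <= b i.+1 ->
  \sum_(j < k.+1) w j x * b j = x.
Proof.
move=> ik h1 h2; rewrite (@sum2 (fun j => w j x * b j) i) //; last first.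
  by move=> j _ /negbTE ji /negbTE jn; rewrite (w_seg _ ik h1 h2) ji jn mul0r.
rewrite !(w_seg _ ik h1 h2) eqxx (gtn_eqF (ltnSn i)) eqxx.
have d : b i.+1 - b i != 0 by rewrite subr_eq0 gt_eqF // Hb.
by field.
Qed.

Lemma w_top x j : b k <= x -> (j <= k)%N -> w j x = if j == k then 1 else 0.
Proof.
move=> bx jk; rewrite /w (phi_eq1 jk) //; last first.
  by apply: le_trans bx; exact: b_mono.
case: eqP => [->|/eqP jk']; first by rewrite phi_big // subr0.
have jk2 : (j.+1 <= k)%N by rewrite ltn_neqAle jk' jk.
rewrite (phi_eq1 jk2) ?subrr //; apply: le_trans bx; exact: b_mono.
Qed.

Lemma wsum_top (y : nat -> R) x : b k <= x -> \sum_(j < k.+1) w j x * y j = y k.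
Proof.
move=> bx; rewrite big_ord_recr /= big1 ?add0r; last first.
  by move=> j _; rewrite (w_top bx (ltnW (ltn_ord j))) (ltn_eqF (ltn_ord j)) mul0r.
by rewrite (w_top bx (leqnn k)) eqxx mul1r.
Qed.

Lemma find_seg x m : (m <= k)%N -> b 0%N <= x -> x < b m ->
  exists i, [/\ (i < m)%N, b i <= x & x <= b i.+1].
Proof.
elim: m => [|m IH] mk h0 hm; first by move: (lt_le_trans hm h0); rewrite ltxx.
have [xm|mx] := ltP x (b m).
  by have [i [im h1 h2]] := IH (ltnW mk) h0 xm; exists i; split => //; exact: ltnW.
by exists m; split => //; exact: ltW.
Qed.

Lemma w_of_prudent (p : nat -> R) i :
  (forall j, (j <= k)%N -> 0 <= p j) -> \sum_(j < k.+1) p j = 1 ->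
  (forall j, (j <= k)%N -> 0 < p j -> j = i \/ j = i.+1) ->
  forall j, (j <= k)%N -> w j (\sum_(l < k.+1) p l * b l) = p j.
Proof.
move=> p0 p1 psupp.
have [k0|kpos] := posnP k.
  move=> j; rewrite k0 leqn0 => /eqP ->.
  move: p1; rewrite k0 big_ord1 => p1.
  by rewrite /w (@phi_big 1%N) ?k0 // subr0 p1.
have [i' [ik supp]] : exists i', (i' < k)%N /\
    (forall j, (j <= k)%N -> 0 < p j -> j = i' \/ j = i'.+1).
  have [ik|ki] := ltnP i k; first by exists i.
  exists k.-1; split; first by rewrite prednK // ltnSn. 
  move=> j jk pj; have := psupp j jk pj; lia.
have pz j : (j <= k)%N -> j != i' -> j != i'.+1 -> p j = 0.
  move=> jk h1 h2; have := p0 j jk; rewrite le_eqVlt => /orP[/eqP<-//|pj].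
  by have [/eqP|/eqP] := supp j jk pj; rewrite ?(negbTE h1) ?(negbTE h2).
have eB : \sum_(l < k.+1) p l * b l = p i' * b i' + p i'.+1 * b i'.+1.
  by apply: (@sum2 (fun l => p l * b l)) => // l lk h1 h2; rewrite pz ?mul0r.
have e1 : p i' + p i'.+1 = 1 by rewrite -p1 (@sum2 p i').
have d : 0 < b i'.+1 - b i' by rewrite subr_gt0 Hb.
have q0 := p0 i' (ltnW ik); have q1 := p0 i'.+1 ik.
have eq1 : p i' * b i' + p i'.+1 * b i'.+1 - b i' = p i'.+1 * (b i'.+1 - b i').
  have -> : p i' = 1 - p i'.+1 by lra.
  ring.
have h1 : b i' <= p i' * b i' + p i'.+1 * b i'.+1.
  by rewrite -subr_ge0 eq1 mulr_ge0 // ltW.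
have eq2 : b i'.+1 - (p i' * b i' + p i'.+1 * b i'.+1) = p i' * (b i'.+1 - b i').
  have -> : p i'.+1 = 1 - p i' by lra.
  ring.
have h2 : p i' * b i' + p i'.+1 * b i'.+1 <= b i'.+1.
  by rewrite -subr_ge0 eq2 mulr_ge0 // ltW.
have th : (p i' * b i' + p i'.+1 * b i'.+1 - b i') / (b i'.+1 - b i') = p i'.+1.
  by rewrite eq1 mulfK // gt_eqF.
move=> j jk; rewrite eB (w_seg _ ik h1 h2) th.
case: eqP => [->|/eqP ji]; first by rewrite -e1 addrK.
case: eqP => [->//|/eqP jn]; by rewrite pz.
Qed.

End Alg.

Section Alg2.
Context (R : realType) (k : nat) (b r : nat -> R).
Hypothesis Hb : forall i, (i < k)%N -> b i < b i.+1.
Hypothesis Hr : forall i, (i < k)%N -> r i.+1 < r i.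
Hypothesis Hrk : 0 <= r k.

Definition g x := \sum_(j < k.+1) w k b j x * r j.

Lemma r_anti m n : (m <= n)%N -> (n <= k)%N -> r n <= r m.
Proof.
move=> mn nk; elim: n mn nk => [|n IH]; first by rewrite leqn0 => /eqP ->.
rewrite leq_eqVlt => /orP[/eqP -> //|]; rewrite ltnS => mn nk.
apply: le_trans (IH mn (ltnW nk)); exact/ltW/Hr.
Qed.

Lemma r_ge0 j : (j <= k)%N -> 0 <= r j.
Proof. by move=> jk; apply: le_trans Hrk (r_anti jk (leqnn k)). Qed.

Lemma r_le0 j : (j <= k)%N -> r j <= r 0%N.
Proof. by move=> jk; apply: r_anti. Qed.

Lemma g_ge0 x : 0 <= g x.
Proof. by apply: sumr_ge0 => j _; rewrite mulr_ge0 ?w_ge0 // r_ge0 // -ltnS. Qed.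

Lemma g_le x : g x <= r 0%N.
Proof.
rewrite /g -[X in _ <= X]mul1r -(sum_w k b x) mulr_suml.
apply: ler_sum => j _; apply: ler_wpM2l; first exact: w_ge0.
by apply: r_le0; rewrite -ltnS.
Qed.

Lemma g_noninc x y : x <= y -> g y <= g x.
Proof.
move=> xy; rewrite /g !wsum_abel lerB // ler_sum // => j _.
apply: ler_wpM2r; first by rewrite subr_ge0 ltW // Hr.
exact: phi_nd.
Qed.

Lemma g_prudent (p : nat -> R) i :
  (forall j, (j <= k)%N -> 0 <= p j) -> \sum_(j < k.+1) p j = 1 ->
  (forall j, (j <= k)%N -> 0 < p j -> j = i \/ j = i.+1) ->
  g (\sum_(l < k.+1) p l * b l) = \sum_(l < k.+1) p l * r l.
Proof.
move=> p0 p1 ps; apply: eq_bigr => j _; rewrite (w_of_prudent Hb p0 p1 ps) //.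
by rewrite -ltnS.
Qed.

End Alg2.


Definition RI (R : realType) (t : R) (f : R -> R) : R :=
  Rintegral lebesgue_measure `[0, t] f.

Section Integ.
Context (R : realType).

Lemma mconv (f : R -> R) : measurable_fun (setT : set R) f ->
  measurable_fun (setT : set (measurableTypeR R)) f.
Proof. exact: id. Qed.

Lemma bnd_int (f : R -> R) (t M : R) : measurable_fun setT f ->
  (forall s, 0 <= s -> `|f s| <= M) ->
  ((@lebesgue_measure R) `[0%R, t] < +oo)%E /\ [bounded f x | x in `[0, t]].
Proof.
move=> mf fM; split.
  by rewrite lebesgue_measure_itv; case: ifP => _; rewrite ?ltry.
exists M; split; first by rewrite num_real.
move=> x Mx y /=; rewrite in_itv /= => /andP[y0 _].
by apply: le_trans (ltW Mx); apply: fM.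
Qed.

Lemma RI_mono_t (f : R -> R) (M t t' : R) : measurable_fun setT f ->
  (forall s, 0 <= s -> 0 <= f s <= M) -> t <= t' ->
  RI t f <= RI t' f.
Proof.
move=> mf fM tt'.
have fM' s : 0 <= s -> `|f s| <= M.
  by move=> s0; have /andP[h1 h2] := fM s s0; rewrite ger0_norm.
have [f1 b1] := bnd_int t mf fM'.
have [f2 b2] := bnd_int t' mf fM'.
rewrite /RI /Rintegral fine_le //.
- apply: integrable_fin_num; first exact: measurable_itv.
  exact (measurable_bounded_integrable (mu := lebesgue_measure) (measurable_itv _) f1 (measurable_funS measurableT (@subsetT _ _) (mconv mf)) b1).
- apply: integrable_fin_num; first exact: measurable_itv.
  exact (measurable_bounded_integrable (mu := lebesgue_measure) (measurable_itv _) f2 (measurable_funS measurableT (@subsetT _ _) (mconv mf)) b2).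
apply: ge0_subset_integral => //; try exact: measurable_itv.
- exact (proj2 (@measurable_EFinP _ _ _ _ f) (measurable_funS measurableT (@subsetT _ _) (mconv mf))).
- by move=> x /=; rewrite in_itv /= => /andP[x0 _]; rewrite lee_fin; case/andP: (fM x x0).
- move=> x /=; rewrite !in_itv /= => /andP[-> xt] /=; exact: le_trans tt'.
Qed.

Lemma RI_le (f1 f2 : R -> R) (M t : R) : measurable_fun setT f1 ->
  measurable_fun setT f2 ->
  (forall s, 0 <= s -> `|f1 s| <= M) -> (forall s, 0 <= s -> `|f2 s| <= M) ->
  (forall s, 0 <= s -> s <= t -> f1 s <= f2 s) ->
  RI t f1 <= RI t f2.
Proof.
move=> m1 m2 h1 h2 h.
have [fi1 b1] := bnd_int t m1 h1.
have [fi2 b2] := bnd_int t m2 h2.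
apply: le_Rintegral; first exact: measurable_itv.
- exact (measurable_bounded_integrable (mu := lebesgue_measure) (measurable_itv _) fi1 (measurable_funS measurableT (@subsetT _ _) (mconv m1)) b1).
- exact (measurable_bounded_integrable (mu := lebesgue_measure) (measurable_itv _) fi2 (measurable_funS measurableT (@subsetT _ _) (mconv m2)) b2).
by move=> x /=; rewrite in_itv /= => /andP[x0 xt]; apply: h.
Qed.

Lemma RI_ge0 (f : R -> R) (t : R) : (forall s, 0 <= s -> 0 <= f s) -> 0 <= RI t f.
Proof.
move=> h; apply: Rintegral_ge0 => x /=; rewrite in_itv /= => /andP[x0 _]; exact: h.
Qed.

Lemma aff_cont (a d x : R) : {for x, continuous (fun y : R => (y - a) / d)}.
Proof.
have h : {for x, continuous ((fun y : R => y - a) \* (fun=> d^-1))}.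
  apply: continuousM; last exact: cst_continuous.
  apply: continuousB => //; last exact: cst_continuous.
exact: h.
Qed.

Lemma clamp_cont (a d x : R) :
  {for x, continuous (fun y : R => Num.min 1 (Num.max 0 ((y - a) / d)))}.
Proof.
have h : {for x, continuous ((fun=> (1:R)) \min ((fun=> (0:R)) \max (fun y : R => (y - a) / d)))}.
  apply: continuous_min; first exact: cst_continuous.
  apply: continuous_max; first exact: cst_continuous.
  exact: aff_cont.
exact: h.
Qed.

Lemma sum_cvg (F : nat -> nat -> R) (l : nat -> R) m :
  (forall j, F j n @[n --> \oo] --> l j) ->
  \sum_(j < m) F j n @[n --> \oo] --> \sum_(j < m) l j.
Proof.
move=> hF; elim: m => [|m IH].
  rewrite big_ord0; have -> : (fun n => \sum_(j < 0) F j n) = fun=> 0.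
    by apply/funext => n; rewrite big_ord0.
  exact: cvg_cst.
rewrite big_ord_recr /=.
have -> : (fun n => \sum_(j < m.+1) F j n) = fun n => \sum_(j < m) F j n + F m n.
  by apply/funext => n; rewrite big_ord_recr.
exact: cvgD.
Qed.

Lemma phi_cvg k (b : nat -> R) j (u : nat -> R) l : u n @[n --> \oo] --> l ->
  phi k b j (u n) @[n --> \oo] --> phi k b j l.
Proof.
move=> ul; rewrite /phi; case: ifP => _; first exact: cvg_cst.
case: ifP => _; last exact: cvg_cst.
exact (continuous_cvg _ (@clamp_cont (b j.-1) (b j - b j.-1) l) ul).
Qed.

Lemma g_cvg k (b r : nat -> R) (u : nat -> R) l : u n @[n --> \oo] --> l ->
  g k b r (u n) @[n --> \oo] --> g k b r l.
Proof.
move=> ul; rewrite /g.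
apply: (@sum_cvg (fun j n => w k b j (u n) * r j) (fun j => w k b j l * r j)) => j.
apply: cvgM; last exact: cvg_cst.
by apply: cvgB; apply: phi_cvg.
Qed.

End Integ.


Lemma RI_E (R : realType) (f : R -> R) (M t : R) : measurable_fun setT f ->
  (forall s, 0 <= s -> `|f s| <= M) ->
  (RI t f)%:E = (\int[lebesgue_measure]_(x in `[0%R, t]) (f x)%:E)%E.
Proof.
move=> mf fM; have [f1 b1] := bnd_int t mf fM.
rewrite /RI /Rintegral fineK //.
apply: integrable_fin_num; first exact: measurable_itv.
exact (measurable_bounded_integrable (mu := lebesgue_measure) (measurable_itv _) f1 (measurable_funS measurableT (@subsetT _ _) (mconv mf)) b1).
Qed.


Section Main.
Context (R : realType) (k : nat) (b r : nat -> R) (c : R) (p : nat -> R -> R).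
Hypothesis Hb : forall i, (i < k)%N -> b i < b i.+1.
Hypothesis Hr : forall i, (i < k)%N -> r i.+1 < r i.
Hypothesis Hrk : 0 <= r k.
Hypothesis Hpp : prudent k p.
Hypothesis Hpc : competitive k b r c p.
Hypothesis c0 : 0 <= c.

Definition hh (I : R -> R) s := c * opt k b r s - I s.
Definition G (I : R -> R) s := g k b r (hh I s).
Fixpoint It n : R -> R :=
  match n with 0%N => fun _ => 0 | n'.+1 => fun t => RI t (G (It n')) end.
Definition J t := RI t (R_p k r p).
Definition Il t := sup (range (fun n => It n t)).

Lemma opt_nd : nondecreasing_fun (opt k b r).
Proof.
move=> x y xy; rewrite /opt; elim/big_rec2: _ => [|i a a' _ h].
  by rewrite lerD2l ler_wpM2l // (r_ge0 Hr Hrk).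
apply: le_min2 => //; rewrite lerD2l ler_wpM2l // (r_ge0 Hr Hrk) //.
by rewrite -ltnS.
Qed.

Lemma opt_meas : measurable_fun setT (opt k b r).
Proof. exact: nondecreasing_measurable opt_nd. Qed.

Lemma hh_meas I : nondecreasing_fun I -> measurable_fun setT (hh I).
Proof.
move=> HI.
exact (measurable_funB (measurable_funM (measurable_cst c) opt_meas)
  (nondecreasing_measurable measurableT HI)).
Qed.

Lemma g_meas : measurable_fun setT (g k b r).
Proof.
apply: nonincreasing_measurable => // x y xy; exact: (g_noninc Hb Hr).
Qed.

Lemma G_meas I : nondecreasing_fun I -> measurable_fun setT (G I).
Proof. move=> HI; exact (measurableT_comp g_meas (hh_meas HI)). Qed.

Lemma G_bnd I s : 0 <= G I s <= r 0%N.
Proof. by rewrite /G (g_ge0 Hb Hr Hrk) (g_le Hb Hr). Qed.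

Lemma G_abs I s : `|G I s| <= r 0%N.
Proof. by case/andP: (G_bnd I s) => h1 h2; rewrite ger0_norm. Qed.

Lemma Rp_meas : measurable_fun setT (R_p k r p).
Proof.
rewrite /R_p; apply: measurable_sum => i.
apply: measurable_funM; last exact: measurable_cst.
by apply: Hpp.1.1; rewrite -ltnS.
Qed.

Lemma Rp_bnd s : 0 <= s -> 0 <= R_p k r p s <= r 0%N.
Proof.
move=> s0; have [_ [p0 p1]] := Hpp.1; apply/andP; split.
  apply: sumr_ge0 => i _; have ik : (i <= k)%N by rewrite -ltnS.
  by apply: mulr_ge0; [exact: p0|exact: (r_ge0 Hr Hrk)].
rewrite /R_p -[X in _ <= X]mul1r -(p1 s s0) mulr_suml.
apply: ler_sum => i _; have ik : (i <= k)%N by rewrite -ltnS.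
by apply: ler_wpM2l; [exact: p0|exact: (r_le0 Hr)].
Qed.

Lemma Rp_abs s : 0 <= s -> `|R_p k r p s| <= r 0%N.
Proof. by move=> s0; case/andP: (Rp_bnd s0) => h1 h2; rewrite ger0_norm. Qed.

Lemma It_props n : nondecreasing_fun (It n) /\ (forall t, 0 <= It n t).
Proof.
elim: n => [|n [IH1 IH2]] /=; first by split.
split.
  move=> x y xy; apply: (RI_mono_t (M := r 0%N)) => //; first exact: G_meas.
  by move=> s _; exact: G_bnd.
move=> t; apply: RI_ge0 => s _; by case/andP: (G_bnd (It n) s).
Qed.

Lemma It_mono n t : It n t <= It n.+1 t.
Proof.
elim: n t => [|n IH] t; first exact: (It_props 1).2.
apply: (RI_le (M := r 0%N)).
- exact: G_meas (It_props n).1.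
- exact: G_meas (It_props n.+1).1.
- by move=> s _; exact: G_abs.
- by move=> s _; exact: G_abs.
move=> s _ _; apply: (g_noninc Hb Hr); rewrite /hh lerB //.
Qed.

Lemma BpJ s : 0 <= s -> B_p k b p s <= c * opt k b r s - J s.
Proof. by move=> s0; rewrite lerBrDr; exact: Hpc.2. Qed.

Lemma Rp_g s : 0 <= s -> R_p k r p s = g k b r (B_p k b p s).
Proof.
move=> s0; have [[_ [p0 p1]] supp] := Hpp.
have [i hi] := supp s s0.
rewrite /B_p /R_p (g_prudent r Hb (p := fun l => p l s) (i := i)) //.
- by move=> j jk; exact: p0.
- exact: p1.
Qed.

Lemma It_leJ n t : It n t <= J t.
Proof.
elim: n t => [|n IH] t /=.
  by apply: RI_ge0 => s s0; case/andP: (Rp_bnd s0).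
apply: (RI_le (M := r 0%N)); first exact: G_meas (It_props n).1.
- exact: Rp_meas.
- by move=> s _; exact: G_abs.
- exact: Rp_abs.
move=> s s0 _; rewrite Rp_g //; apply: (g_noninc Hb Hr).
by apply: le_trans (BpJ s0) _; rewrite /hh lerB.
Qed.

Lemma It_ub t : has_ubound (range (fun n => It n t)).
Proof. by exists (J t) => _ [n _ <-]; exact: It_leJ. Qed.

Lemma It_cvg t : It n t @[n --> \oo] --> Il t.
Proof.
apply: nondecreasing_cvgn; last exact: It_ub.
by apply/nondecreasing_seqP => n; exact: It_mono.
Qed.

Lemma It_le_Il n t : It n t <= Il t.
Proof. by apply: ub_le_sup; [exact: It_ub|exists n]. Qed.

Lemma Il_le_J t : Il t <= J t.
Proof. by apply: ge_sup; [exists (It 0 t), 0%N|move=> _ [n _ <-]; exact: It_leJ]. Qed.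

Lemma Il_nd : nondecreasing_fun Il.
Proof.
move=> x y xy; apply: ge_sup; first by exists (It 0 x), 0%N.
move=> _ [n _ <-]; apply: le_trans (It_le_Il n y).
exact: (It_props n).1.
Qed.

Lemma hh_cvg x : hh (It n) x @[n --> \oo] --> hh Il x.
Proof. exact (cvgB (cvg_cst (c * opt k b r x)) (@It_cvg x)). Qed.

Lemma G_cvg x : G (It n) x @[n --> \oo] --> G Il x.
Proof. exact (@g_cvg R k b r _ _ (@hh_cvg x)). Qed.

Lemma Il_fix t : Il t = RI t (G Il).
Proof.
set gs := fun n s => (G (It n) s)%:E.
have mg n : measurable_fun `[0, t] (gs n).
  exact (proj2 (@measurable_EFinP _ _ _ _ (G (It n))) (measurable_funS measurableT (@subsetT _ _) (mconv (G_meas (It_props n).1)))).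
have g0 n x : (`[0, t]%classic) x -> (0 <= gs n x)%E.
  by move=> _; rewrite lee_fin; case/andP: (G_bnd (It n) x).
have nd x : (`[0, t]%classic) x -> {homo gs^~ x : n m / (n <= m)%N >-> (n <= m)%E}.
  move=> _; apply/nondecreasing_seqP => n; rewrite lee_fin.
  by apply: (g_noninc Hb Hr); rewrite /hh lerB // It_mono.
have MC := monotone_convergence lebesgue_measure (measurable_itv _) mg g0 nd.
have lim1 x : limn (gs^~ x) = (G Il x)%:E.
  have -> : gs^~ x = EFin \o (fun n => G (It n) x) by [].
  rewrite EFin_lim; last exact: cvgP (@G_cvg x).
  by rewrite (cvg_lim _ (@G_cvg x)).
have int1 n : (\int[lebesgue_measure]_(x in `[0%R, t]) gs n x)%E = (It n.+1 t)%:E.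
  rewrite /= (RI_E (M := r 0%N) t (G_meas (It_props n).1)) //.
  by move=> s _; exact: G_abs.
have cvS : (fun n => It n.+1 t) @ \oo --> Il t.
  by have := @It_cvg t; rewrite -(cvg_shiftS (fun n => It n t)).
have lim2 : limn (fun n => (\int[lebesgue_measure]_(x in `[0%R, t]) gs n x)%E) = (Il t)%:E.
  have -> : (fun n => (\int[lebesgue_measure]_(x in `[0%R, t]) gs n x)%E) =
      EFin \o (fun n => It n.+1 t) by apply/funext => n; rewrite int1.
  rewrite EFin_lim; last exact: cvgP cvS.
  by rewrite (cvg_lim _ cvS).
rewrite lim2 in MC.
have e : (\int[lebesgue_measure]_(x in `[0%R, t]) (G Il x)%:E)%E = (Il t)%:E.
  by rewrite -MC; apply: eq_integral => x _; rewrite lim1.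
by rewrite /RI /Rintegral e.
Qed.

Lemma Bp_ge t : 0 <= t -> b 0%N <= B_p k b p t.
Proof.
move=> t0; have [_ [p0 p1]] := Hpp.1.
rewrite /B_p -[X in X <= _]mul1r -(p1 t t0) mulr_suml.
apply: ler_sum => i _; have ik : (i <= k)%N by rewrite -ltnS.
by apply: ler_wpM2l; [exact: p0|exact: (b_mono Hb)].
Qed.

Lemma hh_ge t : 0 <= t -> b 0%N <= hh Il t.
Proof.
move=> t0; apply: le_trans (Bp_ge t0) _; apply: le_trans (BpJ t0) _.
by rewrite /hh lerB // Il_le_J.
Qed.

Definition q j s := w k b j (hh Il s).

Lemma q_prof : profile k q.
Proof.
split.
  move=> i _; have hm := hh_meas Il_nd.
  exact (measurable_funB
    (measurableT_comp (nondecreasing_measurable measurableT (phi_nd Hb i)) hm)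
    (measurableT_comp (nondecreasing_measurable measurableT (phi_nd Hb i.+1)) hm)).
split; first by move=> i t _ _; exact: w_ge0.
by move=> t _; exact: sum_w.
Qed.

Lemma Xq t : X_p k b r q t = B_p k b q t + Il t.
Proof. by rewrite (Il_fix t). Qed.

Lemma Bq t : 0 <= t -> B_p k b q t <= hh Il t /\ (hh Il t < b k -> B_p k b q t = hh Il t).
Proof.
move=> t0; rewrite /B_p /q; have [bx|xb] := leP (b k) (hh Il t).
  by rewrite (wsum_top Hb b bx); split => // /(le_lt_trans bx); rewrite ltxx.
have [i [ik h1 h2]] := find_seg (leqnn k) (hh_ge t0) xb.
by rewrite (B_seg Hb ik h1 h2).
Qed.

Lemma q_tight : tight k b r c q.
Proof.
have qp : prudent k q.
  split; first exact: q_prof.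
  move=> t t0; have [bx|xb] := leP (b k) (hh Il t).
    exists k => j jk; rewrite /q (w_top Hb bx jk).
    by case: eqP => [->|_]; [left|rewrite ltxx].
  have [i [ik h1 h2]] := find_seg (leqnn k) (hh_ge t0) xb.
  exists i => j jk; rewrite /q (w_seg Hb j ik h1 h2).
  case: eqP => [->|_]; first by left.
  by case: eqP => [->|_]; [right|rewrite ltxx].
split => //; split.
  split; first exact: q_prof.
  move=> t t0; rewrite Xq; have [h _] := Bq t0.
  by rewrite -lerBrDr.
move=> t t0 qk; rewrite Xq; have [_ h] := Bq t0.
rewrite h ?/hh ?subrK //.
rewrite ltNge; apply/negP => bx; move: qk.
by rewrite /q (w_top Hb bx (leqnn k)) eqxx ltxx.
Qed.

End Main.


Theorem lemma4p5 (R : realType) (k : nat) (b r : nat -> R) (c : R) :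
  valid_instance k b r -> 1 <= c ->
  (exists p, prudent k p /\ competitive k b r c p) ->
  exists q, tight k b r c q.
Proof.
move=> [_ [Hb [Hr [Hrk _]]]] c1 [p [Hpp Hpc]].
have c0 : 0 <= c by apply: le_trans c1; exact: ler01.
by exists (q k b r c); exact: (q_tight Hb Hr Hrk Hpp Hpc).
Qed.
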